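(* Let $\mathcal{T}$ be an $l$-eligible microdata table and run the algorithm described in the context (arbitrary tie-breaking). If the algorithm terminates during Phase Two, then the final residue set $\ddot{R}$ together with the remaining groups is a feasible solution of the reformulated tuple minimization problem and $|\ddot{R}| \le OPT + l - 1$.
   Context: A microdata table $\mathcal{T}$ is a multiset of $n$ tuples with values on $d$ quasi-identifier (QI) attributes and one sensitive attribute (SA). For a multiset $Q$ and SA value $v$, $h(Q,v)$ is the number of tuples in $Q$ with SA value $v$, $h(Q)=\max_v h(Q,v)$, pillars of $Q$ are the $v$ with $h(Q,v)=h(Q)$; $Q$ is $l$-eligible if $|Q|\ge l\cdot h(Q)$. Let $Q_1,\dots,Q_s$ be the maximal classes of tuples of $\mathcal{T}$ with identical values on all QI attributes. Reformulated tuple minimization: choose sub-multisets $Q'_i\subseteq Q_i$ and $R'=\mathcal{T}\setminus\bigcup_i Q'_i$ with all $Q'_i$ and $R'$ $l$-eligible, minimizing $|R'|$; $OPT$ is the minimum. The algorithm only moves tuples from the groups into a set $R$ (initially empty). Phase One: for each $i$, while $Q_i$ is not $l$-eligible, move a tuple of a pillar of $Q_i$ to $R$; if then $R$ is $l$-eligible, terminate. Phase Two terminology (w.r.t. current state): a group $Q$ is thin if $|Q|=l\cdot h(Q)$ and fat if $|Q|\ge l\cdot h(Q)+1$; $Q$ is conflicting if some pillar of $Q$ is a pillar of $R$; $Q$ is dead if thin and conflicting, alive otherwise; an SA value $v$ is alive if some alive group $Q$ has $h(Q,v)>0$. Phase Two iterates: if no SA value is alive, Phase Two ends (go to Phase Three).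 Otherwise pick an alive SA value $v$ minimizing $h(R,v)$ and an alive group $Q$ with $h(Q,v)>0$ (ties arbitrary); if $Q$ is fat move one tuple with SA value $v$ from $Q$ to $R$; if $Q$ is thin move one tuple of each pillar of $Q$ to $R$. If $R$ is now $l$-eligible, the algorithm terminates. *)

(* Defs.v *)
From mathcomp Require Import all_boot.
Set Implicit Arguments. Unset Strict Implicit. Unset Printing Implicit Defensive.

(* A microdata table is modelled by multiplicities: t q v = number of tuples
   with QI-vector q and SA value v.  The QI class of q is the multiset t q
   (over SA values).  A "state" s : Q -> V -> nat records the SA multiset
   currently left in each QI group; the residue R is the rest of the table. *)

Definition msize (V : finType) (c : V -> nat) : nat := \sum_(v : V) c v.
Definition hmax (V : finType) (c : V -> nat) : nat := \max_(v : V) c v.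
Definition eligible (l : nat) (V : finType) (c : V -> nat) : bool :=
  l * hmax c <= msize c.
Definition pillar (V : finType) (c : V -> nat) (v : V) : bool := c v == hmax c.

Definition table_hist (Q V : finType) (t : Q -> V -> nat) : V -> nat :=
  fun v => \sum_(q : Q) t q v.
Definition resid (Q V : finType) (t s : Q -> V -> nat) : V -> nat :=
  fun v => \sum_(q : Q) (t q v - s q v).

Definition feasible (l : nat) (Q V : finType) (t c : Q -> V -> nat) : Prop :=
  (forall q v, c q v <= t q v) /\ (forall q, eligible l (c q)) /\
  eligible l (resid t c).

Inductive star (A : Type) (r : A -> A -> Prop) : A -> A -> Prop :=
| star_refl x : star r x x
| star_step x y z : r x y -> star r y z -> star r x z.

Definition p1_step (l : nat) (Q V : finType) (s s' : Q -> V -> nat) : Prop :=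
  exists q v, ~~ eligible l (s q) /\ pillar (s q) v /\
    forall q' u, s' q' u = if (q' == q) && (u == v) then (s q v).-1 else s q' u.

Definition thin (l : nat) (V : finType) (c : V -> nat) : bool := msize c == l * hmax c.
Definition fat (l : nat) (V : finType) (c : V -> nat) : bool := l * hmax c + 1 <= msize c.
Definition conflicting (Q V : finType) (t s : Q -> V -> nat) (q : Q) : bool :=
  [exists v, pillar (s q) v && pillar (resid t s) v].
Definition dead (l : nat) (Q V : finType) (t s : Q -> V -> nat) (q : Q) : bool :=
  thin l (s q) && conflicting t s q.
Definition alive_group (l : nat) (Q V : finType) (t s : Q -> V -> nat) (q : Q) : bool :=
  ~~ dead l t s q.
Definition alive_val (l : nat) (Q V : finType) (t s : Q -> V -> nat) (v : V) : bool :=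
  [exists q, alive_group l t s q && (0 < s q v)].

Definition p2_step (l : nat) (Q V : finType) (t s s' : Q -> V -> nat) : Prop :=
  exists v q,
    alive_val l t s v /\
    (forall u, alive_val l t s u -> resid t s v <= resid t s u) /\
    alive_group l t s q /\ 0 < s q v /\
    ((fat l (s q) /\
      forall q' u, s' q' u = if (q' == q) && (u == v) then (s q v).-1 else s q' u)
     \/
     (thin l (s q) /\
      forall q' u, s' q' u = if q' == q then s q u - pillar (s q) u else s q' u)).

(* p2_term l t s sf : starting Phase Two (from a state s where R is not
   l-eligible), a sequence of >= 1 Phase Two iterations ends in sf, R becomes
   l-eligible exactly at sf, so the algorithm terminates there. *)
Inductive p2_term (l : nat) (Q V : finType) (t : Q -> V -> nat) :
  (Q -> V -> nat) -> (Q -> V -> nat) -> Prop :=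
| p2_last s s' : p2_step l t s s' -> eligible l (resid t s') -> p2_term l t s s'
| p2_more s s' s'' : p2_step l t s s' -> ~~ eligible l (resid t s') ->
    p2_term l t s' s'' -> p2_term l t s s''.

(* Main.v *)
Require Import Defs.
From mathcomp Require Import all_boot.
From mathcomp Require Import zify.
Set Implicit Arguments. Unset Strict Implicit. Unset Printing Implicit Defensive.

Lemma hmax_ge (V : finType) (c : V -> nat) v : c v <= hmax c.
Proof. exact: (leq_bigmax v). Qed.

Lemma hmax_le (V : finType) (c : V -> nat) m : (forall v, c v <= m) -> hmax c <= m.
Proof. by move=> H; apply/bigmax_leqP => v _; exact: H. Qed.

Lemma hmax_mono (V : finType) (c d : V -> nat) :
  (forall v, c v <= d v) -> hmax c <= hmax d.
Proof. by move=> H; apply: hmax_le => v; exact: leq_trans (H v) (hmax_ge d v). Qed.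

Lemma msize_mono (V : finType) (c d : V -> nat) :
  (forall v, c v <= d v) -> msize c <= msize d.
Proof. by move=> H; apply: leq_sum => v _; exact: H. Qed.

Lemma elig_ext l (V : finType) (c d : V -> nat) : c =1 d -> eligible l c = eligible l d.
Proof. by move=> E; rewrite /eligible /hmax /msize !(eq_bigr d (fun u _ => E u)). Qed.

Lemma star_ind' (A : Type) (r : A -> A -> Prop) (P : A -> Prop) x y :
  star r x y -> P x -> (forall a b, r a b -> P a -> P b) -> P y.
Proof.
by move=> H; elim: H => [z|a b c Hab _ IH] Pa Hst //; apply: IH => //; exact: Hst Pa.
Qed.

Lemma resid_upd (Q V : finType) (t s s' : Q -> V -> nat) q :
  (forall q' u, s q' u <= t q' u) ->
  (forall u, s' q u <= s q u) ->
  (forall q' u, q' != q -> s' q' u = s q' u) ->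
  forall u, resid t s' u = resid t s u + (s q u - s' q u).
Proof.
move=> Hst Hs' Hoth u; rewrite /resid (bigD1 q) //= [in RHS](bigD1 q) //=.
rewrite (eq_bigr (fun q' => t q' u - s q' u)); last by move=> q' /Hoth ->.
have := Hst q u; have := Hs' u; lia.
Qed.

Lemma msize_resid_upd (Q V : finType) (t s s' : Q -> V -> nat) q :
  (forall q' u, s q' u <= t q' u) ->
  (forall u, s' q u <= s q u) ->
  (forall q' u, q' != q -> s' q' u = s q' u) ->
  msize (resid t s') = msize (resid t s) + \sum_(u : V) (s q u - s' q u).
Proof.
move=> H1 H2 H3; rewrite /msize -big_split /=; apply: eq_bigr => u _.
exact: resid_upd.
Qed.

Definition inv1 (l : nat) (Q V : finType) (t s : Q -> V -> nat) : Prop :=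
  (forall q v, s q v <= t q v) /\
  (forall q (c : V -> nat), (forall v, c v <= t q v) -> eligible l c ->
     forall v, c v <= s q v).

Lemma inv1_step (l : nat) (Q V : finType) (t s s' : Q -> V -> nat) :
  p1_step l s s' -> inv1 l t s -> inv1 l t s'.
Proof.
move=> [q0 [v0 [Hne [Hp Hs']]]] [Hst Hc].
have Hle : forall q u, s' q u <= s q u.
  move=> q u; rewrite Hs'; case: ifP => // /andP[/eqP -> /eqP ->].
  exact: leq_pred.
split.
  by move=> q u; exact: leq_trans (Hle q u) (Hst q u).
move=> q c Hct Hel u; rewrite Hs'.
case: ifP => [/andP[/eqP Eq /eqP Eu]|_]; last exact: Hc.
subst q u.
have Hcv := Hc q0 c Hct Hel v0.
case: (leqP (c v0) (s q0 v0).-1) => // Hlt.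
have Eqc : c v0 = s q0 v0 by lia.
exfalso; move/negP: Hne; apply.
have Hh : hmax c = hmax (s q0).
  apply/eqP; rewrite eqn_leq hmax_mono; last exact: (Hc q0 c Hct Hel).
  by rewrite -(eqP Hp) -Eqc hmax_ge.
have Hm := msize_mono (Hc q0 c Hct Hel).
by rewrite /eligible -Hh; apply: leq_trans Hel Hm.
Qed.

Lemma p2_step_props (l : nat) (Q V : finType) (t s s' : Q -> V -> nat) :
  p2_step l t s s' ->
  (forall q v, s q v <= t q v) -> (forall q, eligible l (s q)) ->
  ~~ eligible l (resid t s) ->
  [/\ (forall q v, s' q v <= t q v), (forall q, eligible l (s' q)),
      hmax (resid t s') <= hmax (resid t s) &
      msize (resid t s') <= msize (resid t s) + l].
Proof.
move=> [v [q [Hav [Hmin [Hal [Hpos Hcase]]]]]] Hst Hel Hne.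
set R := resid t s; set H := hmax R.
have lpos : 0 < l.
  case: (posnP l) => // l0; exfalso.
  by move: Hne; rewrite /eligible l0 mul0n.
have hpos : 0 < hmax (s q) by exact: leq_trans Hpos (hmax_ge _ _).
case: Hcase => [[Hfat Hs']|[Hthin Hs']].
-
  have Hle : forall u, s' q u <= s q u.
    by move=> u; rewrite Hs' eqxx /=; case: ifP => // /eqP ->; exact: leq_pred.
  have Hoth : forall q' u, q' != q -> s' q' u = s q' u.
    by move=> q' u /negbTE Hq; rewrite Hs' Hq.
  have Hle2 : forall q' u, s' q' u <= s q' u.
    by move=> q' u; case: (eqVneq q' q) => [->|/Hoth ->] //.
  have Hsum : \sum_(u : V) (s q u - s' q u) = 1.
    rewrite (bigD1 v) //= big1 => [|u /negbTE Hu]; last by rewrite Hs' eqxx Hu subnn.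
    rewrite Hs' !eqxx /=; lia.
  have HvH : R v < H.
    case: (ltnP (R v) H) => // HHv; exfalso; move/negP: Hne; apply.
    set A := [pred u | 0 < s q u].
    have HA : forall u, A u -> H <= R u.
      move=> u Au; apply: leq_trans HHv (Hmin u _).
      by apply/existsP; exists q; rewrite Hal.
    have Hsz : msize (s q) <= #|A| * hmax (s q).
      rewrite /msize (bigID A) /= [X in _ + X]big1 => [|u]; last first.
        by rewrite /A /= -leqNgt leqn0 => /eqP.
      rewrite addn0 -sum_nat_const; apply: leq_sum => u _; exact: hmax_ge.
    have HlA : l < #|A|.
      rewrite ltnNge; apply/negP => HAl; move: Hfat; rewrite /fat.
      have : #|A| * hmax (s q) <= l * hmax (s q) by rewrite leq_mul2r HAl orbT.
      lia.
    rewrite /eligible -/R -/H; apply: (@leq_trans (#|A| * H)).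
      by rewrite leq_mul2r (ltnW HlA) orbT.
    rewrite /msize (bigID A) /= -sum_nat_const; apply: leq_trans (leq_addr _ _).
    by apply: leq_sum => u Au; exact: HA.
  split.
  + by move=> q' u; exact: leq_trans (Hle2 q' u) (Hst q' u).
  + move=> q'; case: (eqVneq q' q) => [->|Hq]; last first.
      by rewrite (elig_ext l (fun u => Hoth q' u Hq)); exact: Hel.
    have Hm : msize (s' q) + 1 = msize (s q).
      rewrite /msize [in RHS](bigD1 v) //= [in LHS](bigD1 v) //= Hs' !eqxx /=.
      rewrite (eq_bigr (fun u => s q u)); last by move=> u /negbTE Hu; rewrite Hs' eqxx Hu.
      lia.
    have Hh : hmax (s' q) <= hmax (s q) by apply: hmax_mono.
    rewrite /eligible; move: Hfat; rewrite /fat.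
    have : l * hmax (s' q) <= l * hmax (s q) by rewrite leq_mul2l Hh orbT.
    lia.
  + apply: hmax_le => u; rewrite (resid_upd Hst Hle Hoth) -/R.
    case: (eqVneq u v) => [->|Hu]; first by rewrite Hs' !eqxx /=; move: HvH Hpos; rewrite -/H; lia.
    by rewrite Hs' eqxx (negbTE Hu) subnn addn0; exact: hmax_ge.
  + by rewrite (msize_resid_upd Hst Hle Hoth) Hsum leq_add2l.
-
  set h := hmax (s q).
  have Hpil : forall u, pillar (s q) u -> s q u = h by move=> u /eqP.
  have Hle : forall u, s' q u <= s q u by move=> u; rewrite Hs' eqxx leq_subr.
  have Hoth : forall q' u, q' != q -> s' q' u = s q' u.
    by move=> q' u /negbTE Hq; rewrite Hs' Hq.
  have Hle2 : forall q' u, s' q' u <= s q' u.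
    by move=> q' u; case: (eqVneq q' q) => [->|/Hoth ->] //.
  have Hd : forall u, s q u - s' q u = pillar (s q) u.
    move=> u; rewrite Hs' eqxx; case: (boolP (pillar (s q) u)) => [/Hpil Hu|_].
      rewrite Hu /=; lia.
    by rewrite subn0 subnn.
  set p := \sum_(u : V) (pillar (s q) u : nat).
  have Hsum : \sum_(u : V) (s q u - s' q u) = p by apply: eq_bigr => u _; rewrite Hd.
  have Hpl : p <= l.
    have Hph : p * h <= l * h.
      rewrite -(eqP Hthin) /msize /p big_distrl /=; apply: leq_sum => u _.
      by case: (boolP (pillar (s q) u)) => [/Hpil ->|_]; rewrite ?mul1n ?mul0n.
    by rewrite -(leq_pmul2r hpos).
  split.
  + by move=> q' u; exact: leq_trans (Hle2 q' u) (Hst q' u).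
  + move=> q'; case: (eqVneq q' q) => [->|Hq]; last first.
      by rewrite (elig_ext l (fun u => Hoth q' u Hq)); exact: Hel.
    have Hm : msize (s' q) + p = msize (s q).
      rewrite /msize /p -big_split /=; apply: eq_bigr => u _.
      have := Hd u; have := Hle u; lia.
    have Hh : hmax (s' q) <= h.-1.
      apply: hmax_le => u; rewrite Hs' eqxx.
      case: (boolP (pillar (s q) u)) => [/Hpil ->|Hnp]; first by rewrite subn1.
      rewrite subn0; have := hmax_ge (s q) u; rewrite -/h.
      move: Hnp; rewrite /pillar -/h; move=> /eqP; lia.
    rewrite /eligible; move: Hthin; rewrite /thin -/h => /eqP Ht.
    have : l * hmax (s' q) <= l * h.-1 by rewrite leq_mul2l Hh orbT.
    rewrite -/h in hpos; nia.
  + apply: hmax_le => u; rewrite (resid_upd Hst Hle Hoth) -/R Hd.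
    case: (boolP (pillar (s q) u)) => [Hpu|_]; last by rewrite addn0; exact: hmax_ge.
    case: (ltnP (R u) H) => [|HRu]; first by rewrite addn1.
    exfalso; move/negP: Hal; apply; rewrite /dead Hthin /=.
    apply/existsP; exists u; rewrite Hpu /pillar -/R -/H /=.
    by rewrite eqn_leq HRu hmax_ge.
  + by rewrite (msize_resid_upd Hst Hle Hoth) Hsum leq_add2l.
Qed.

Lemma p2_main (l : nat) (Q V : finType) (t : Q -> V -> nat) (H0 : nat) s sf :
  p2_term l t s sf ->
  (forall q v, s q v <= t q v) -> (forall q, eligible l (s q)) ->
  ~~ eligible l (resid t s) -> hmax (resid t s) <= H0 ->
  [/\ (forall q v, sf q v <= t q v), (forall q, eligible l (sf q)),
      eligible l (resid t sf) & msize (resid t sf) + 1 <= l * H0 + l].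
Proof.
elim => [a b Hst Hel | a b c Hst Hne' _ IH] Ht Hg Hne HH.
- have [H1 H2 H3 H4] := p2_step_props Hst Ht Hg Hne.
  split => //.
  have : l * hmax (resid t a) <= l * H0 by rewrite leq_mul2l HH orbT.
  move: Hne; rewrite /eligible -ltnNge; lia.
- have [H1 H2 H3 H4] := p2_step_props Hst Ht Hg Hne.
  by apply: IH => //; exact: leq_trans H3 HH.
Qed.

Theorem corollary3 (Q V : finType) (l : nat) (t s1 sf : Q -> V -> nat) :
  (* the table is l-eligible *)
  eligible l (table_hist t) ->
  (* Phase One: moves from the original groups, ending with all groups l-eligible *)
  star (@p1_step l Q V) t s1 ->
  (forall q, eligible l (s1 q)) ->
  (* the algorithm does not terminate in Phase One *)
  ~~ eligible l (resid t s1) ->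
  (* it terminates during Phase Two with final state sf *)
  p2_term l t s1 sf ->
  feasible l t sf /\
  (forall c, feasible l t c -> msize (resid t sf) <= msize (resid t c) + l - 1).
Proof.
move=> _ Hstar Hel1 Hne1 Hp2.
have [Hst1 Hc1] : inv1 l t s1.
  apply: (star_ind' Hstar); last by move=> a b; exact: inv1_step.
  by split => // q c Hct _ v; exact: Hct.
have [F1 F2 F3 F4] := p2_main Hp2 Hst1 Hel1 Hne1 (leqnn _).
split; first by split.
move=> c [Hct [Hcel Hrc]].
have Hr : forall v, resid t s1 v <= resid t c v.
  move=> v; apply: leq_sum => q _; apply: leq_sub2l; exact: Hc1.
have : l * hmax (resid t s1) <= l * hmax (resid t c).
  by rewrite leq_mul2l hmax_mono ?orbT.
move: Hrc F4; rewrite /eligible; lia.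
Qed.
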